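(* For all $n\ge 2$, \[\left|\mathrm{Av}_n[\overline{12}34]\right|=\left|\mathrm{Av}_n[\overline{12}43]\right|=1+\sum_{i=0}^{n-2} i\,(i+1)^{n-i-2}.\]
   Context: For $\sigma\in S_n$, the cyclic permutation $[\sigma]$ is the set of all rotations of $\sigma$; $[S_n]$ is the set of cyclic permutations of length $n$. A vincular pattern is a permutation $\pi\in S_k$ with some pairs of adjacent positions joined by an overline; a linear permutation $\tau$ contains it if $\tau$ has a subsequence order-isomorphic to $\pi$ whose entries corresponding to overlined adjacent positions are adjacent in $\tau$. $[\sigma]$ contains $[\pi]$ if some rotation of $\sigma$ contains $\pi$. For example $[\overline{12}34]$ is contained in $[\sigma]$ iff some rotation of $\sigma$ has entries $a,b,c,d$ in this order with $a,b$ adjacent and $a<b<c<d$. $\mathrm{Av}_n[\pi]$ is the set of $[\sigma]\in[S_n]$ avoiding $[\pi]$. *)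

(* Defs.v *)
From HB Require Import structures.
From mathcomp Require Import all_boot all_fingroup.
Set Implicit Arguments. Unset Strict Implicit. Unset Printing Implicit Defensive.
Local Open Scope group_scope.

(* Linear permutations of length n are elements of 'S_n (one-line notation
   sigma(0) ... sigma(n-1), positions and values 0-based). *)

Definition cshift (n : nat) : 'S_n := perm (@ordS_inj n).

(* rotation of sigma by k: position j holds sigma((j+k) mod n).
   In mathcomp, (s * t) x = t (s x). *)
Definition rotp (n k : nat) (s : 'S_n) : 'S_n := (cshift n ^+ k) * s.

Definition cyc (n : nat) (s : 'S_n) : {set 'S_n} := [set rotp k s | k : 'I_n].

(* A vincular pattern: a permutation p in S_k, together with a predicate
   adj on positions: adj j means positions j and j+1 are overlined (joined). *)
Definition vcontains (n k : nat) (tau : 'S_n) (p : 'S_k) (adj : pred nat) : bool :=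
  [exists f : {ffun 'I_k -> 'I_n},
    [&& [forall a : 'I_k, forall b : 'I_k, (a < b)%N ==> (f a < f b)%N],
        [forall a : 'I_k, forall b : 'I_k, (p a < p b)%N == (tau (f a) < tau (f b))%N] &
        [forall a : 'I_k, forall b : 'I_k,
           (adj a && (b == a.+1 :> nat)) ==> (f b == (f a).+1 :> nat)]]].

Definition cyc_contains (n k : nat) (s : 'S_n) (p : 'S_k) (adj : pred nat) : bool :=
  [exists r : 'I_n, vcontains (rotp r s) p adj].

Definition cycAv (n k : nat) (p : 'S_k) (adj : pred nat) : {set {set 'S_n}} :=
  [set cyc s | s in [set s : 'S_n | ~~ cyc_contains s p adj]].

(* The patterns  12̄34  (p = 1234) and 12̄43 (p = 1243), 0-based, with
   positions 0 and 1 joined. *)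
Definition p1234 : 'S_4 := 1.
Definition p1243 : 'S_4 := tperm (inord 2 : 'I_4) (inord 3).
Definition adj12 : pred nat := pred1 0.

(* Main.v *)
Require Import Defs.
From mathcomp Require Import all_boot all_fingroup.
From mathcomp Require Import zify.
Set Implicit Arguments. Unset Strict Implicit. Unset Printing Implicit Defensive.
Ltac fixb := repeat match goal with H : (_ = false) |- _ => move/negbT: H => H | H : (?b = true) |- _ => change (is_true b) in H end.
Ltac mylia := fixb; lia.

Lemma nth_rot (w : seq nat) r j : r <= size w -> j < size w ->
  nth 0 (rot r w) j = nth 0 w (if j < size w - r then j + r else j - (size w - r)).
Proof.
move=> rs js; rewrite /rot nth_cat size_drop.
case: ifP => h; first by rewrite nth_drop addnC.
by rewrite nth_take //; mylia.
Qed.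

Lemma index_rot (w : seq nat) r y : uniq w -> y \in w -> r <= size w ->
  index y (rot r w) = if r <= index y w then index y w - r else index y w + size w - r.
Proof.
move=> uw yw rs.
have ij: index y w < size w by rewrite index_mem.
set j := (if _ then _ else _).
have js : j < size w by rewrite /j; case: ifP => ?; mylia.
have E : nth 0 (rot r w) j = y.
  rewrite nth_rot // /j; case: (leqP r (index y w)) => h.
    rewrite ifT; last by mylia.
    have->: index y w - r + r = index y w by mylia.
    by rewrite nth_index.
  rewrite ifN; last by mylia.
  have->: index y w + size w - r - (size w - r) = index y w by mylia.
  by rewrite nth_index.
by rewrite -{1}E index_uniq ?size_rot ?rot_uniq.
Qed.

Lemma rot_head (w : seq nat) r b : uniq w -> r <= size w -> b \in w ->
  nth 0 (rot r w) 0 = b -> rot r w = rot (index b w) w.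
Proof.
move=> uw rs bw E.
have ib : index b (rot r w) = 0.
  have sp : 0 < size (rot r w) by rewrite size_rot; case: (w) bw.
  by rewrite -E index_uniq ?rot_uniq.
move: ib; rewrite index_rot //; case: ifP => h1 h2.
  by have -> : r = index b w by mylia.
have -> : r = size w by have := index_size b w; mylia.
have -> : index b w = 0 by mylia.
by rewrite rot_size rot0.
Qed.

Lemma rotRI (w : seq nat) r b : uniq w -> r <= size w -> b \in w ->
  rot (index b (rot r w)) (rot r w) = rot (index b w) w.
Proof.
move=> uw rs bw.
rewrite rot_rot_add; apply: rot_head => //; first exact: leq_rot_add.
by rewrite -rot_rot_add rot_index ?mem_rot.
Qed.

Definition ins (M : nat) (w : seq nat) b :=
  let i := index b w in if i == 0 then rcons w M else take i w ++ M :: drop i w.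
Definition rm (M : nat) (w : seq nat) := filter (predC1 M) w.

Lemma insR M (w : seq nat) b : b \in w ->
  exists2 k, k <= size (M :: rot (index b w) w) & ins M w b = rot k (M :: rot (index b w) w).
Proof.
move=> bw; rewrite /ins; case: eqP => [->|ne].
  by exists 1; rewrite ?rot0 ?rot1_cons.
exists (size (M :: drop (index b w) w)).
  by rewrite /rot /= ltnS size_cat leq_addr.
have -> : rot (index b w) w = drop (index b w) w ++ take (index b w) w by [].
by rewrite -cat_cons rot_size_cat.
Qed.

Lemma next_at_indep (x y0 y0' y : nat) p : x != last y p -> next_at x y0 y p = next_at x y0' y p.
Proof.
elim: p y => [|y' p IH] y /=; first by move/negbTE->.
by move=> ne; case: (x == y) => //; apply: IH.
Qed.

Lemma next_at_last (y0 y : nat) p : uniq (y :: p) -> next_at (last y p) y0 y p = y0.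
Proof.
elim: p y => [|y' p IH] y /=; first by rewrite eqxx.
rewrite inE negb_or => /andP[/andP[ne yp] up].
have -> : (last y' p == y) = false.
  have : y \notin y' :: p by rewrite inE negb_or ne yp.
  by apply: contraNF => /eqP <-; exact: mem_last.
exact: IH.
Qed.

Lemma all_cons' T (a : pred T) x s : all a (x :: s) = a x && all a s.
Proof. by []. Qed.

Lemma count_cons' T (a : pred T) x s : count a (x :: s) = a x + count a s.
Proof. by []. Qed.

Section Lists.
Variable up : bool.
Definition R (x y : nat) : bool := if up then x < y else y < x.

Definition cyc3 (w : seq nat) x y z :=
  let i := index x w in let j := index y w in let k := index z w in
  [|| (i < j) && (j < k), (j < k) && (k < i) | (k < i) && (i < j)].

Definition good (w : seq nat) b :=
  all (fun c => all (fun d => [&& c < b, d < b & cyc3 w b c d] ==> R c d) w) w.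

Definition V w := all (fun a => (next w a < a) ==> good w (next w a)) w.
Definition g w := count (good w) w.
Definition sf w b := pairwise R (rot (index b w) w).
Definition sp w := has (sf w) w.

Lemma cyc3_rot w r x y z : uniq w -> x \in w -> y \in w -> z \in w -> r <= size w ->
  cyc3 (rot r w) x y z = cyc3 w x y z.
Proof.
move=> uw xw yw zw rs; rewrite /cyc3 !index_rot //.
have := index_mem x w; have := index_mem y w; have := index_mem z w.
rewrite xw yw zw => hz hy hx.
set n := size w in rs hx hy hz *; set a := index x w in hx *; set b := index y w in hy *; set c := index z w in hz *.
clearbody n a b c.
case: ifP => ?; case: ifP => ?; case: ifP => ?; mylia.
Qed.

Lemma perm_rot' (w : seq nat) r : perm_eq (rot r w) w.
Proof. by rewrite perm_rot. Qed.

Lemma good_rot w r b : uniq w -> r <= size w -> b \in w -> good (rot r w) b = good w b.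
Proof.
move=> uw rs bw; rewrite /good (eq_all_r (mem_rot r w)).
apply: eq_in_all => c cw; rewrite (eq_all_r (mem_rot r w)).
by apply: eq_in_all => d dw; rewrite cyc3_rot.
Qed.

Lemma V_rot w r : uniq w -> r <= size w -> V (rot r w) = V w.
Proof.
move=> uw rs; rewrite /V (eq_all_r (mem_rot r w)).
by apply: eq_in_all => a aw; rewrite next_rot // good_rot // mem_next.
Qed.

Lemma g_rot w r : uniq w -> r <= size w -> g (rot r w) = g w.
Proof.
move=> uw rs; rewrite /g ((seq.permP (perm_rot' w r)) (good (rot r w))).
by apply: eq_in_count => b bw; rewrite good_rot.
Qed.

Lemma sf_rot w r b : uniq w -> r <= size w -> b \in w -> sf (rot r w) b = sf w b.
Proof. by move=> uw rs bw; rewrite /sf rotRI. Qed.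

Lemma sp_rot w r : uniq w -> r <= size w -> sp (rot r w) = sp w.
Proof.
move=> uw rs; rewrite /sp has_rot; apply: eq_in_has => b bw; exact: sf_rot.
Qed.


Lemma goodP w y : reflect (forall c d, c \in w -> d \in w -> c < y -> d < y -> cyc3 w y c d -> R c d) (good w y).
Proof.
apply: (iffP allP) => [H c d cw dw cy dy cyc | H c cw].
  by have := allP (H c cw) d dw; rewrite cy dy cyc.
by apply/allP => d dw; apply/implyP => /and3P[cy dy cyc]; apply: H.
Qed.

Lemma cyc3_cons M u y z t : M \notin u -> y \in u -> z \in u -> t \in u ->
  cyc3 (M :: u) y z t = cyc3 u y z t.
Proof.
move=> Mu yu zu tu.
have F : forall v, v \in u -> (M == v) = false.
  by move=> v vu; apply/eqP => E; move: Mu; rewrite E vu.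
by rewrite /cyc3 /= !F // !ltnS.
Qed.

Lemma good_cons M u y : (forall x, x \in u -> x < M) -> y \in u ->
  good (M :: u) y = good u y.
Proof.
move=> uM yu.
have Mu : M \notin u by apply/negP => /uM; rewrite ltnn.
have yM := uM y yu.
apply/goodP/goodP => H c d cu du cy dy.
  move=> cyc; apply: H => //; first (by rewrite inE cu orbT); first (by rewrite inE du orbT).
  by rewrite cyc3_cons.
have cu' : c \in u by move: cu; rewrite inE => /orP[/eqP E|//]; move: cy; rewrite E ltnNge ltnW.
have du' : d \in u by move: du; rewrite inE => /orP[/eqP E|//]; move: dy; rewrite E ltnNge ltnW.
by rewrite cyc3_cons //; apply: H.
Qed.

Lemma pairwise_idx (u : seq nat) : uniq u ->
  reflect (forall c d, c \in u -> d \in u -> index c u < index d u -> R c d) (pairwise R u).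
Proof.
move=> uu; apply: (iffP (pairwiseP 0)) => [H c d cu du lt | H i j ilt jlt lt].
  rewrite -(nth_index 0 cu) -(nth_index 0 du); apply: H => //; by rewrite inE /= index_mem.
by apply: H; rewrite ?mem_nth ?index_uniq.
Qed.

Lemma good_cons_M M u : uniq u -> (forall x, x \in u -> x < M) ->
  good (M :: u) M = pairwise R u.
Proof.
move=> uu uM.
have Mu : M \notin u by apply/negP => /uM; rewrite ltnn.
have F : forall v, v \in u -> (M == v) = false.
  by move=> v vu; apply/eqP => E; move: Mu; rewrite E vu.
apply/goodP/(pairwise_idx uu) => H c d cu du.
  move=> lt; apply: H; rewrite ?inE ?cu ?du ?orbT ?uM //.
  by rewrite /cyc3 /= eqxx !F //= !ltnS lt.
move=> cM dM; move: cu du.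
have NE : forall v, v < M -> (v == M) = false by move=> v vM; apply/negbTE; rewrite neq_ltn vM.
rewrite !inE !NE //= => cu du; rewrite /cyc3 /= eqxx !F //= !ltnS andbF orbF.
by rewrite orbF; apply: H.
Qed.

Lemma next_cons_other (M b : nat) (u' : seq nat) (a : nat) : a != M -> a != last b u' ->
  next (M :: b :: u') a = next (b :: u') a.
Proof.
move=> aM al; rewrite /= (negbTE aM); exact: next_at_indep.
Qed.

Lemma V_cons (M b : nat) (u' : seq nat) : uniq (b :: u') -> (forall x, x \in b :: u' -> x < M) ->
  V (M :: b :: u') = V (b :: u') && good (b :: u') b.
Proof.
move=> uu uM.
have Mu : M \notin b :: u' by apply/negP => /uM; rewrite ltnn.
have nM : next (M :: b :: u') M = b by rewrite /= eqxx.
have bu : b \in b :: u' by rewrite mem_head.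
have lu : last b u' \in b :: u' by exact: mem_last.
have nL : next (M :: b :: u') (last b u') = M.
  rewrite /= ifF; first by apply: next_at_last.
  by apply/negbTE/eqP => E; move: Mu; rewrite -E lu.
have nL' : next (b :: u') (last b u') = b by apply: next_at_last.
have aM : forall a, a \in b :: u' -> a != M by move=> a /uM; rewrite neq_ltn => ->.
rewrite {1}/V all_cons' nM (uM b bu) implyTb good_cons //; rewrite /V.
apply/andP/andP => [[H1 /allP H2]|[/allP H1 H2]]; split => //.
- apply/allP => a au; case: (a =P last b u') => [->|ne].
    by rewrite nL' H1 implybT.
  have := H2 a au; rewrite next_cons_other ?aM //; last exact/eqP.
  by rewrite good_cons // mem_next.
- apply/allP => a au; case: (a =P last b u') => [->|ne].
    by rewrite nL ltnNge ltnW // uM.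
  rewrite next_cons_other ?aM //; last exact/eqP.
  by rewrite good_cons ?mem_next //; apply: H1.
Qed.


Lemma R_cases : (forall x y, R x y = (x < y)) \/ (forall x y, R x y = (y < x)).
Proof. by rewrite /R; case: up; [left|right]. Qed.

Lemma R_tr : transitive R.
Proof. by case: R_cases => H x y z; rewrite !H; [move=> a b; exact: ltn_trans a b | move=> a b; exact: ltn_trans b a]. Qed.

Lemma R_irr : irreflexive R.
Proof. by case: R_cases => H x; rewrite H ltnn. Qed.

Lemma sp_cons (M : nat) (u : seq nat) : uniq u -> (forall x, x \in u -> x < M) -> u != [::] ->
  sp (M :: u) = pairwise R u.
Proof.
move=> uu uM un0.
have Mu : M \notin u by apply/negP => /uM; rewrite ltnn.
have uw : uniq (M :: u) by rewrite /= Mu uu.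
apply/hasP/idP.
  case=> b' b'w; rewrite /sf => Hp.
  move: Hp; set v := rot (index b' (M :: u)) (M :: u) => Hp.
  have Mv : M \in v by rewrite mem_rot mem_head.
  have E1 : rot (index M v) v = M :: u.
    by rewrite /v rotRI ?index_size ?mem_head //= eqxx rot0.
  have E2 : v = take (index M v) v ++ M :: drop (index M v).+1 v.
    by rewrite -{1}(cat_take_drop (index M v) v) (drop_nth 0) ?index_mem // nth_index.
  have E3 : u = drop (index M v).+1 v ++ take (index M v) v.
    by move: E1; rewrite rot_index // => -[].
  move: (take _ v) (drop _ v) E2 E3 => A B E2 E3.
  have inu : forall x, x \in A -> x \in u by move=> x xA; rewrite E3 mem_cat xA orbT.
  have inu' : forall x, x \in B -> x \in u by move=> x xB; rewrite E3 mem_cat xB.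
  move: Hp; rewrite E2 pairwise_cat pairwise_cons => /and3P[Hall HA /andP[HMB HB]].
  case: R_cases => HR.
    case: B HMB E3 inu' {E2 HB Hall} => [|x B'] /=; first by move=> _ ->.
    rewrite HR => /andP[Mx _] _ inu'.
    by have := uM x (inu' x (mem_head _ _)); rewrite ltnNge ltnW.
  case: A Hall E3 inu {E2 HA} => [|x A'] /=; first by rewrite cats0 => _ ->.
  rewrite /allrel /= HR => /andP[/andP[Mx _] _] _ inu.
  by have := uM x (inu x (mem_head _ _)); rewrite ltnNge ltnW.
move=> Hp; case: R_cases => HR.
  case: u uu uM un0 Hp Mu {uw} => [|b u'] // uu uM _ Hp Mu.
  exists b; first by rewrite !inE eqxx orbT.
  rewrite /sf.
  have -> : index b [:: M, b & u'] = 1.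
    by rewrite /= ifF ?eqxx //; apply/negbTE/eqP => E; move: Mu; rewrite E mem_head.
  rewrite rot1_cons pairwise_rcons Hp andbT.
  by apply/allP => x xu; rewrite HR uM.
exists M; first exact: mem_head.
rewrite /sf /= eqxx rot0 pairwise_cons Hp andbT.
by apply/allP => x xu; rewrite HR uM.
Qed.

Lemma sp_all_good w : uniq w -> sp w -> forall b, b \in w -> good w b.
Proof.
move=> uw /hasP[b0 b0w Hp] b bw.
rewrite -(good_rot (r:=index b0 w) uw) ?index_size //.
move: Hp; rewrite /sf; set u := rot _ w => Hp.
have uu : uniq u by rewrite rot_uniq.
move/(pairwise_idx uu): Hp => H.
apply/goodP => c d cu du cb db.
rewrite /cyc3 => /or3P[/andP[h1 h2]|/andP[h1 h2]|/andP[h1 h2]]; try exact: H.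
have bu : b \in u by rewrite mem_rot.
have Rdb := H d b du bu h1; have Rbc := H b c bu cu h2.
by case: R_cases => HR; move: Rdb Rbc; rewrite !HR => ? ?; mylia.
Qed.

Lemma sf_uniq w b1 b2 : uniq w -> b1 \in w -> b2 \in w -> sf w b1 -> sf w b2 -> b1 = b2.
Proof.
move=> uw b1w b2w H1 H2.
have E : rot (index b1 w) w = rot (index b2 w) w.
  apply: (irr_sorted_eq R_tr R_irr); rewrite ?pairwise_sorted //.
  by move=> x; rewrite !mem_rot.
by move: E; rewrite !rot_index // => -[].
Qed.

Lemma sp_count w : uniq w -> sp w -> count (sf w) w = 1.
Proof.
move=> uw spw; have /hasP[b0 b0w Hp] := spw.
rewrite (@eq_in_count _ _ (pred1 b0)) ?count_uniq_mem ?b0w //.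
move=> b bw /=; apply/idP/eqP => [H|->//]; exact: sf_uniq H Hp.
Qed.

Section Ins.
Variables (M : nat) (w : seq nat) (b : nat).
Hypotheses (uw : uniq w) (wM : forall x, x \in w -> x < M) (bw : b \in w).

Let u := rot (index b w) w.
Let uu : uniq u. Proof. by rewrite rot_uniq. Qed.
Let uM : forall x, x \in u -> x < M. Proof. by move=> x; rewrite mem_rot; apply: wM. Qed.
Let Mu : M \notin u. Proof. by apply/negP => /uM; rewrite ltnn. Qed.
Let uMu : uniq (M :: u). Proof. by rewrite /= Mu uu. Qed.
Let hu : u = b :: (drop (index b w).+1 w ++ take (index b w) w).
Proof. exact: rot_index. Qed.

Lemma V_ins : V (ins M w b) = V w && good w b.
Proof.
have [k kle ->] := insR M bw.
rewrite V_rot //.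
have VC := @V_cons M b (drop (index b w).+1 w ++ take (index b w) w).
rewrite -hu in VC; rewrite VC //.
by rewrite V_rot ?good_rot ?index_size.
Qed.

Lemma g_ins : g (ins M w b) = g w + sf w b.
Proof.
have [k kle ->] := insR M bw.
rewrite g_rot // {1}/g count_cons' good_cons_M // addnC; congr (_ + _).
rewrite (@eq_in_count _ _ (good u)) => [|x xu]; last exact: good_cons.
by rewrite -/(g u) g_rot ?index_size.
Qed.

Lemma sp_ins : sp (ins M w b) = sf w b.
Proof.
have [k kle ->] := insR M bw.
by rewrite sp_rot // sp_cons // (rot_index bw).
Qed.

Lemma next_ins : next (ins M w b) M = b.
Proof.
have [k kle ->] := insR M bw.
by rewrite next_rot // (rot_index bw) /= eqxx.
Qed.

End Ins.

End Lists.

Lemma rm_id M (w : seq nat) : M \notin w -> rm M w = w.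
Proof.
move=> Mw; apply/all_filterP/allP => x xw /=.
by apply: contraNneq Mw => <-.
Qed.

Lemma rm_ins M (w : seq nat) b : M \notin w -> rm M (ins M w b) = w.
Proof.
move=> Mw; have F := rm_id Mw; rewrite /rm in F.
rewrite /rm /ins; case: ifP => _.
  by rewrite filter_rcons /= eqxx F.
by rewrite filter_cat /= eqxx /= -filter_cat cat_take_drop F.
Qed.

Lemma iotaS0 M : iota 0 M.+1 = rcons (iota 0 M) M.
Proof. by rewrite -addn1 iotaD add0n cats1. Qed.

Lemma perm_ins M (w : seq nat) b : perm_eq w (iota 0 M) -> b \in w ->
  perm_eq (ins M w b) (iota 0 M.+1).
Proof.
move=> pw bw; have [k _ ->] := insR M bw.
by rewrite perm_rot iotaS0 perm_sym perm_rcons perm_cons perm_sym perm_rot.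
Qed.

Lemma head_ins M (w : seq nat) b : w != [::] -> head 0 (ins M w b) = head 0 w.
Proof.
rewrite /ins; case: (index b w) => [|i] /=; case: w => //.
Qed.

Lemma recover_cat M (A B : seq nat) : uniq (A ++ M :: B) -> A != [::] ->
  ins M (A ++ B) (next (A ++ M :: B) M) = A ++ M :: B /\ next (A ++ M :: B) M \in A ++ B.
Proof.
case: A => [|a0 A'] // U _.
have := U; rewrite cat_uniq => /and3P[uA /hasPn HA /andP[MB uB]].
have MA : M \notin a0 :: A' by apply: HA; rewrite mem_head.
have nxt : next ((a0 :: A') ++ M :: B) M = head a0 B.
  rewrite next_nth mem_cat mem_head orbT /=.
  have -> : (a0 == M) = false by apply/negbTE; apply: contraNneq MA => ->; rewrite mem_head.
  move: MA; rewrite inE negb_or => /andP[_ MA'].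
  by rewrite index_cat (negbTE MA') /= eqxx addn0 nth_cat ltnNge leqnSn /= subSnn /= nth0.
rewrite nxt; case: B U HA MB uB nxt => [|b0 B'] U HA MB uB nxt /=.
  by rewrite cats0 /ins /= eqxx cats1 mem_head.
have b0A : b0 \notin a0 :: A' by apply: HA; rewrite !inE eqxx orbT.
have E : index b0 (a0 :: A' ++ b0 :: B') = (size A').+1.
  by rewrite -cat_cons index_cat (negbTE b0A) /= eqxx addn0.
rewrite /ins E /= take_size_cat // drop_size_cat //.
by split => //; rewrite !(inE, mem_cat) eqxx !orbT.
Qed.

Lemma uniq_flatten_h (s : seq (seq nat)) (t : seq nat -> seq (seq nat)) h :
  uniq s -> (forall x, x \in s -> uniq (t x)) ->
  (forall x y, x \in s -> y \in t x -> h y = x) ->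
  uniq (flatten [seq t x | x <- s]).
Proof.
elim: s => //= x s IH /andP[xs us] Ht Hh.
rewrite cat_uniq Ht ?mem_head //= IH //; last first.
- by move=> x' y x's yt; apply: Hh; rewrite ?inE ?x's ?orbT.
- by move=> x' x's; apply: Ht; rewrite inE x's orbT.
rewrite andbT; apply/hasPn => y /flatten_mapP[x' x's yt'].
apply/negP => yt.
have E1 := Hh x y (mem_head _ _) yt.
have E2 : h y = x' by apply: Hh; rewrite ?inE ?x's ?orbT.
by move: xs; rewrite -E1 E2 x's.
Qed.

Section Count.
Variable up : bool.

Definition S M := [seq w <- permutations (iota 0 M) | (head 0 w == 0) && V up w].

Lemma memS M L : (L \in S M) = ((head 0 L == 0) && V up L) && perm_eq L (iota 0 M).
Proof. by rewrite mem_filter mem_permutations. Qed.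

Lemma piota_uniq M (w : seq nat) : perm_eq w (iota 0 M) -> uniq w.
Proof. by move=> pw; rewrite (perm_uniq pw) iota_uniq. Qed.
Lemma piota_mem M (w : seq nat) x : perm_eq w (iota 0 M) -> (x \in w) = (x < M).
Proof. by move=> pw; rewrite (perm_mem pw) mem_iota. Qed.
Lemma piota_size M (w : seq nat) : perm_eq w (iota 0 M) -> size w = M.
Proof. by move=> pw; rewrite (perm_size pw) size_iota. Qed.

Definition T M := flatten [seq [seq ins M w b | b <- [seq b <- w | good up w b]] | w <- S M].

Lemma FIB M : 0 < M -> perm_eq (S M.+1) (T M).
Proof.
move=> M0; apply: uniq_perm.
- exact/filter_uniq/permutations_uniq.
- apply: (@uniq_flatten_h _ _ (rm M)).
  + exact/filter_uniq/permutations_uniq.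
  + move=> w; rewrite memS => /andP[_ pw].
    have uw := piota_uniq pw.
    rewrite map_inj_in_uniq ?filter_uniq // => b1 b2; rewrite !mem_filter => /andP[_ b1w] /andP[_ b2w] E.
    have wM : forall x, x \in w -> x < M by move=> x; rewrite (piota_mem _ pw).
    by rewrite -(next_ins uw wM b1w) E (next_ins uw wM b2w).
  + move=> w y; rewrite memS => /andP[_ pw] /mapP[b _ ->].
    by apply: rm_ins; rewrite (piota_mem _ pw) ltnn.
move=> L; apply/idP/flatten_mapP.
  rewrite memS => /andP[/andP[hL VL] pL].
  have uL := piota_uniq pL.
  have ML : M \in L by rewrite (piota_mem _ pL).
  set p := index M L.
  have p0 : 0 < p.
    rewrite lt0n; apply/eqP => E; move: hL; rewrite -nth0 -E nth_index //.
    by rewrite E => /eqP E'; move: M0; rewrite E'.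
  have pL' : p < size L by rewrite index_mem.
  have EL : L = take p L ++ M :: drop p.+1 L.
    by rewrite -{1}(cat_take_drop p L) (drop_nth 0) // nth_index.
  move: (take p L) (drop p.+1 L) EL (size_takel (ltnW pL')) => A B EL sA.
  have An : A != [::] by apply/eqP => E; move: sA p0; rewrite E /= => <-.
  rewrite EL in uL.
  have [Ei Ein] := recover_cat uL An.
  move: uL; rewrite cat_uniq => /and3P[uA /hasPn HA /andP[MB uB]].
  have MA : M \notin A by apply: HA; rewrite mem_head.
  have rmL : rm M L = A ++ B.
    rewrite EL /rm filter_cat /= eqxx /= -filter_cat; apply: (rm_id (M:=M)); by rewrite mem_cat negb_or MA.
  have pw : perm_eq (A ++ B) (iota 0 M).
    rewrite -rmL /rm.
    have -> : iota 0 M = [seq x <- iota 0 M.+1 | predC1 M x].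
      by rewrite iotaS0 filter_rcons /= eqxx; symmetry; apply: (rm_id (M:=M)); rewrite mem_iota ltnn.
    exact: perm_filter.
  have uw := piota_uniq pw.
  have wM : forall x, x \in A ++ B -> x < M by move=> x; rewrite (piota_mem _ pw).
  set b := next (A ++ M :: B) M in Ei Ein.
  have VL' : V up (ins M (A ++ B) b) by rewrite Ei -EL.
  rewrite (V_ins up uw wM Ein) in VL'; case/andP: VL' => Vw gb.
  exists (A ++ B).
    rewrite memS pw Vw andbT /= andbT.
    by move: hL; rewrite EL; case: (A) An.
  by rewrite EL -Ei; apply: map_f; rewrite mem_filter gb.
case=> w; rewrite memS => /andP[/andP[hw Vw] pw] /mapP[b]; rewrite mem_filter => /andP[gb bw] ->.
have uw := piota_uniq pw.
have wM : forall x, x \in w -> x < M by move=> x; rewrite (piota_mem _ pw).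
rewrite memS perm_ins // V_ins // gb Vw !andbT head_ins //.
by apply/eqP => E; move: pw; rewrite E => /piota_size; move: M0 => /[swap] <-.
Qed.


Lemma countS M (Q : pred (seq nat)) : 0 < M ->
  count Q (S M.+1) = sumn [seq count (fun b => good up w b && Q (ins M w b)) w | w <- S M].
Proof.
move=> M0; rewrite (seq.permP (FIB M0)) /T count_flatten -map_comp; congr sumn.
apply: eq_map => w /=; rewrite count_map count_filter; apply: eq_count => b /=.
by rewrite andbC.
Qed.

Lemma S1 : S 1 = [:: [:: 0]].
Proof. by []. Qed.

Lemma sumn_lin (s : seq (seq nat)) (a b : pred (seq nat)) x y :
  sumn [seq a w * x + b w * y | w <- s] = count a s * x + count b s * y.
Proof. by elim: s => //= w s ->; rewrite !mulnDl addnACA. Qed.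

Lemma Zrec M : 0 < M -> count (sp up) (S M.+1) = count (sp up) (S M).
Proof.
move=> M0; rewrite countS // -sumn_count; congr sumn; apply/eq_in_map => w.
rewrite memS => /andP[_ pw].
have uw := piota_uniq pw.
have wM : forall x, x \in w -> x < M by move=> x; rewrite (piota_mem _ pw).
rewrite (@eq_in_count _ _ (fun b => good up w b && sf up w b)) => [|b bw]; last by rewrite sp_ins.
case: (boolP (sp up w)) => spw /=.
  rewrite (@eq_in_count _ _ (sf up w)) ?sp_count // => b bw /=.
  by rewrite sp_all_good.
rewrite (@eq_in_count _ _ pred0) ?count_pred0 // => b bw /=; apply/negbTE.
by apply: contra spw => /andP[_ h]; apply/hasP; exists b.
Qed.

Lemma Nrec M k : 0 < M ->
  count (fun w => ~~ sp up w && (g up w == k)) (S M.+1) =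
  count (fun w => ~~ sp up w && (g up w == k)) (S M) * k + count (sp up) (S M) * ((M == k) * (M - 1)).
Proof.
move=> M0; rewrite countS // -sumn_lin; congr sumn; apply/eq_in_map => w.
rewrite memS => /andP[_ pw].
have uw := piota_uniq pw.
have wM : forall x, x \in w -> x < M by move=> x; rewrite (piota_mem _ pw).
rewrite (@eq_in_count _ _ (fun b => good up w b && ~~ sf up w b && (g up w + sf up w b == k)))
  => [|b bw]; last by rewrite sp_ins // g_ins // andbA.
case: (boolP (sp up w)) => spw /=.
  have gw : g up w = M.
    rewrite /g (@eq_in_count _ _ predT) ?count_predT ?(piota_size pw) // => b bw.
    by rewrite sp_all_good.
  rewrite gw (@eq_in_count _ _ (fun b => (M == k) && ~~ sf up w b)) => [|b bw]; last first.
    by rewrite sp_all_good //=; case: (sf up w b); rewrite ?andbF ?addn0 ?andbT.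
  case: (M == k) => /=; last by rewrite count_pred0.
  have := count_predC (sf up w) w; rewrite sp_count // (piota_size pw) => <-.
  by rewrite mul0n add0n !mul1n add1n subn1 succnK.
rewrite (@eq_in_count _ _ (fun b => (g up w == k) && good up w b)) => [|b bw]; last first.
  have -> : sf up w b = false by apply/negbTE; apply: contra spw => h; apply/hasP; exists b.
  by rewrite addn0 andbT andbC.
rewrite addn0; case: eqP => [<-|_] /=; last by rewrite count_pred0.
by rewrite mul1n.
Qed.

Lemma Zone M : 0 < M -> count (sp up) (S M) = 1.
Proof.
elim: M => [|[|M] IH] // _.
by rewrite Zrec // IH.
Qed.

Lemma Nclosed M k : 0 < M ->
  count (fun w => ~~ sp up w && (g up w == k)) (S M) = if k < M then (k - 1) * k ^ (M - 1 - k) else 0.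
Proof.
elim: M k => [|[|M] IH] k // _.
  by rewrite S1 /=; case: k.
rewrite Nrec // IH // Zone // mul1n.
have [h|[h|h]] : k < M.+1 \/ k = M.+1 \/ M.+1 < k by mylia.
- have -> : (k < M.+1) = true by mylia.
  have -> : (k < M.+2) = true by mylia.
  have -> : (M.+1 == k) = false by mylia.
  have -> : M.+2 - 1 - k = (M.+1 - 1 - k).+1 by mylia.
  by rewrite mul0n addn0 expnS mulnAC -mulnA.
- rewrite h ltnn ltnSn eqxx mul0n add0n mul1n.
  have -> : M.+2 - 1 - M.+1 = 0 by mylia.
  by rewrite muln1.
- have -> : (k < M.+1) = false by mylia.
  have -> : (k < M.+2) = false by mylia.
  have -> : (M.+1 == k) = false by mylia.
  by [].
Qed.

End Count.

Lemma count_decomp (s : seq (seq nat)) (a : pred (seq nat)) (h : seq nat -> nat) K :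
  (forall w, w \in s -> h w <= K) ->
  count a s = \sum_(k < K.+1) count (fun w => a w && (h w == k)) s.
Proof.
elim: s => [|w s IH] H; first by rewrite big1.
rewrite /= big_split /= -IH; last by move=> x xs; apply: H; rewrite inE xs orbT.
congr (_ + _).
have hw : h w < K.+1 by rewrite ltnS H ?mem_head.
rewrite (bigD1 (Ordinal hw)) //= eqxx andbT big1 ?addn0 // => i ne.
case: eqP => [E|]; last by rewrite andbF.
by move: ne; rewrite (_ : i = Ordinal hw) ?eqxx //; apply/val_inj.
Qed.

Lemma size_S up n : 0 < n ->
  size (S up n) = (1 + \sum_(0 <= i < n.-1) i * (i.+1) ^ (n - i - 2))%N.
Proof.
move=> n0.
rewrite -(count_predC (sp up)) Zone //; congr (_ + _).
rewrite (@count_decomp _ _ (g up) n) => [|w]; last first.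
  rewrite memS => /andP[_ pw]; rewrite -(piota_size pw); exact: count_size.
rewrite big_ord_recr /= (Nclosed up) // ltnn addn0.
rewrite (eq_bigr (fun k : 'I_n => (k - 1) * k ^ (n - 1 - k))) => [|i _]; last first.
  by rewrite (Nclosed up) // ltn_ord.
case: n n0 => // n _ /=; rewrite big_ord_recl /= big_mkord; apply: eq_bigr => i _.
rewrite /bump /= add1n subn1 /=.
by have -> : n.+1 - 1 - i.+1 = n.+1 - i - 2 by mylia.
Qed.

Section Bridge.
Variable n : nat.

Definition wl (s : 'S_n) : seq nat := [seq n.-1 - nat_of_ord (s i) | i <- enum 'I_n].

Lemma size_wl s : size (wl s) = n.
Proof. by rewrite size_map size_enum_ord. Qed.

Lemma nth_wl s (x : 'I_n) : nth 0 (wl s) x = n.-1 - s x.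
Proof.
rewrite /wl (nth_map x) ?size_enum_ord //; congr (_ - nat_of_ord (s _)).
by apply: ord_inj; rewrite /= nth_enum_ord.
Qed.

Lemma cshiftX k (j : 'I_n) : val ((cshift n ^+ k)%g j) = (j + k) %% n.
Proof.
elim: k j => [|k IH] j; first by rewrite expg0 perm1 addn0 modn_small.
rewrite expgSr permM /cshift permE /= IH -[((j + k) %% n).+1]addn1 modnDml.
by congr (_ %% _); mylia.
Qed.

Lemma rotpE k (s : 'S_n) (j : 'I_n) : rotp k s j = s ((cshift n ^+ k)%g j).
Proof. by rewrite /rotp permM. Qed.

Lemma rotp_add a b (s : 'S_n) : rotp a (rotp b s) = rotp (a + b) s.
Proof. by rewrite /rotp mulgA expgD. Qed.

Lemma rotp0 (s : 'S_n) : rotp 0 s = s.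
Proof. by rewrite /rotp expg0 mul1g. Qed.

Lemma cshift_n : 0 < n -> (cshift n ^+ n = 1)%g.
Proof.
move=> n0; apply/permP => j; rewrite perm1; apply: ord_inj.
by rewrite cshiftX modnDr modn_small.
Qed.

Lemma rotp_modn a (s : 'S_n) : 0 < n -> rotp a s = rotp (a %% n) s.
Proof.
move=> n0; rewrite {1}(divn_eq a n) /rotp expgD mulnC expgM cshift_n //.
by rewrite expg1n mul1g.
Qed.

Lemma wl_rot k (s : 'S_n) : k < n -> wl (rotp k s) = rot k (wl s).
Proof.
move=> kn; apply: (@eq_from_nth _ 0); first by rewrite size_rot !size_wl.
rewrite size_wl => j jn.
rewrite nth_rot ?size_wl ?(ltnW kn) //.
have hj : (if j < n - k then j + k else j - (n - k)) < n by case: ifP => ?; mylia.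
rewrite (nth_wl s (Ordinal hj)) (nth_wl _ (Ordinal jn)) rotpE; congr (_ - nat_of_ord (s _)).
apply: ord_inj; rewrite cshiftX /=.
case: ifP => h; first by rewrite modn_small //; mylia.
have -> : j + k = (j - (n - k)) + n by mylia.
by rewrite modnDr modn_small //; mylia.
Qed.

Lemma wl_inj : injective wl.
Proof.
move=> s t E; apply/permP => i; apply: ord_inj.
have := congr1 (fun w => nth 0 w i) E; rewrite /= !nth_wl.
have := ltn_ord (s i); have := ltn_ord (t i); mylia.
Qed.

Lemma wl_perm (s : 'S_n) : perm_eq (wl s) (iota 0 n).
Proof.
apply: uniq_perm; last first.
- move=> x; rewrite mem_iota add0n /=; apply/mapP/idP => [[i _ ->]|xn].
    by have := ltn_ord i; mylia.
  have hx : n.-1 - x < n by mylia.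
  exists ((s^-1)%g (Ordinal hx)); first by rewrite mem_enum.
  by rewrite permKV /=; mylia.
- exact: iota_uniq.
rewrite map_inj_uniq ?enum_uniq // => i j E; apply: (@perm_inj _ s); apply: ord_inj.
by move: E; have := ltn_ord (s i); have := ltn_ord (s j); mylia.
Qed.

Lemma wl_surj (L : seq nat) : perm_eq L (iota 0 n) -> exists s, wl s = L.
Proof.
move=> pL.
have uL := piota_uniq pL.
have sL := piota_size pL.
have hlt : forall i : 'I_n, n.-1 - nth 0 L i < n by move=> i; have := ltn_ord i; mylia.
pose f (i : 'I_n) := Ordinal (hlt i).
have Lb : forall i : 'I_n, nth 0 L i < n.
  by move=> i; rewrite -(piota_mem _ pL) mem_nth // sL.
have f_inj : injective f.
  move=> i j /(congr1 val) /= E; apply: ord_inj; apply/eqP.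
  rewrite -(nth_uniq 0 _ _ uL) ?sL //; apply/eqP.
  move: E (Lb i) (Lb j); set a := nth 0 L i; set b := nth 0 L j; clearbody a b; mylia.
exists (perm f_inj); apply: (@eq_from_nth _ 0); first by rewrite size_wl sL.
rewrite size_wl => j jn; rewrite (nth_wl _ (Ordinal jn)) permE /=.
by have := Lb (Ordinal jn); rewrite /=; mylia.
Qed.

End Bridge.

Section BR.
Variable up : bool.

Definition lin (v : seq nat) := exists i j l, i.+1 < j /\ j < l /\ l < size v /\
  nth 0 v i.+1 < nth 0 v i /\ nth 0 v j < nth 0 v i.+1 /\ nth 0 v l < nth 0 v i.+1 /\
  ~~ R up (nth 0 v j) (nth 0 v l).

Lemma next_nth_uniq (v : seq nat) i : uniq v -> i.+1 < size v -> next v (nth 0 v i) = nth 0 v i.+1.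
Proof.
case: v => [|y p] // U h.
rewrite next_nth mem_nth ?(ltnW h) // index_uniq ?(ltnW h) //=.
by apply: set_nth_default; rewrite /= ltnS in h.
Qed.

Lemma BR (w : seq nat) : uniq w -> 1 < size w ->
  (exists r, r < size w /\ lin (rot r w)) <-> ~~ V up w.
Proof.
move=> uw sw; split.
  case=> r [rs [i [j [l [h1 [h2 [h3 [v1 [v2 [v3 v4]]]]]]]]]].
  move: h3 v1 v2 v3 v4; set v := rot r w => h3 v1 v2 v3 v4.
  have uv : uniq v by rewrite rot_uniq.
  have sv : size v = size w by rewrite size_rot.
  have inw : forall k, k < size v -> nth 0 v k \in w.
    by move=> k kv; rewrite -(mem_rot r) mem_nth.
  apply/allPn; exists (nth 0 v i); first by apply: inw; mylia.
  have hi : i.+1 < size v by mylia.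
  have nx : next w (nth 0 v i) = nth 0 v i.+1.
    by rewrite -(next_rot r uw) next_nth_uniq.
  rewrite nx negb_imply v1 /=.
  apply/negP => /goodP H; move: v4; rewrite H //; try (apply: inw; mylia).
  rewrite -(cyc3_rot (r:=r)) ?inw ?(ltnW rs) //; try mylia.
  have hj : j < size v by mylia.
  by rewrite /cyc3 (index_uniq 0 hi uv) (index_uniq 0 hj uv) (index_uniq 0 h3 uv) h1 h2.
move/allPn => [a aw]; rewrite negb_imply => /andP[na ng].
move: na ng; set b := next w a => na ng.
have bw : b \in w by rewrite mem_next.
move: ng => /allPn [c cw] /allPn [d dw]; rewrite negb_imply => /andP [/and3P[cb db cyc] nR].
exists (index a w); split; first by rewrite index_mem.
set v := rot (index a w) w.
have hv : v = a :: (drop (index a w).+1 w ++ take (index a w) w) := rot_index aw.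
have uv : uniq v by rewrite rot_uniq.
have sv : size v = size w by rewrite size_rot.
have v0 : nth 0 v 0 = a by rewrite hv.
have v1 : nth 0 v 1 = b.
  have h := @next_nth_uniq v 0 uv; rewrite v0 in h; rewrite -h ?sv //.
  exact: (next_rot _ uw a).
have cv : c \in v by rewrite mem_rot.
have dv : d \in v by rewrite mem_rot.
have ib : index b v = 1 by rewrite -v1 index_uniq // sv.
have ic0 : index c v != 0.
  apply/eqP => E; have := nth_index 0 cv; rewrite E v0 => E'; move: cb na; rewrite E'; mylia.
have id0 : index d v != 0.
  apply/eqP => E; have := nth_index 0 dv; rewrite E v0 => E'; move: db na; rewrite E'; mylia.
rewrite -(cyc3_rot (r := index a w)) ?index_size // /cyc3 -/v ib in cyc.
have ics : index c v < size v by rewrite index_mem.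
have ids : index d v < size v by rewrite index_mem.
exists 0, (index c v), (index d v).
rewrite v0 v1 !nth_index //.
by move: cyc; mylia.
Qed.

End BR.

Lemma pv1 (a : 'I_4) : nat_of_ord (p1234 a) = nth 0 [:: 0; 1; 2; 3] a.
Proof. by rewrite /p1234 perm1; case: a => [[|[|[|[|a]]]] Ha]. Qed.

Lemma pv2 (a : 'I_4) : nat_of_ord (p1243 a) = nth 0 [:: 0; 1; 3; 2] a.
Proof. case: a => [[|[|[|[|a]]]] Ha] //; rewrite /p1243 permE /= -!val_eqE /= ?inordK //. Qed.

Section VC.
Variable n : nat.

Lemma vc_lin (up : bool) (p : 'S_4)
  (Hp : forall a : 'I_4, nat_of_ord (p a) = nth 0 (if up then [:: 0; 1; 2; 3] else [:: 0; 1; 3; 2]) a)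
  (t : 'S_n) : vcontains t p adj12 <-> lin up (wl t).
Proof.
split.
  move=> /existsP [f /and3P [/forallP Hi /forallP Ho /forallP Ha]].
  pose o0 : 'I_4 := Ordinal (isT : 0 < 4); pose o1 : 'I_4 := Ordinal (isT : 1 < 4).
  pose o2 : 'I_4 := Ordinal (isT : 2 < 4); pose o3 : 'I_4 := Ordinal (isT : 3 < 4).
  have I12 : f o1 < f o2 := implyP (forallP (Hi o1) o2) isT.
  have I23 : f o2 < f o3 := implyP (forallP (Hi o2) o3) isT.
  have A01 : nat_of_ord (f o1) = (f o0).+1 := eqP (implyP (forallP (Ha o0) o1) isT).
  have O01 := eqP (forallP (Ho o0) o1); have O12 := eqP (forallP (Ho o1) o2).
  have O13 := eqP (forallP (Ho o1) o3); have O23 := eqP (forallP (Ho o2) o3).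
  rewrite !Hp /= in O01 O12 O13 O23.
  have := ltn_ord (t (f o0)); have := ltn_ord (t (f o1)); have := ltn_ord (t (f o2));
  have := ltn_ord (t (f o3)); have := ltn_ord (f o3) => B3 T3 T2 T1 T0.
  exists (f o0), (f o2), (f o3).
  rewrite -A01 size_wl !nth_wl /R.
  case: up Hp O01 O12 O13 O23 => _ O01 O12 O13 O23 /=; rewrite /= in O01 O12 O13 O23;
  set G0 := nat_of_ord (t (f o0)) in O01 O12 O13 O23 T0 T1 T2 T3 I12 I23 A01 B3 *; set G1 := nat_of_ord (t (f o1)) in O01 O12 O13 O23 T0 T1 T2 T3 I12 I23 A01 B3 *;
  set G2 := nat_of_ord (t (f o2)) in O01 O12 O13 O23 T0 T1 T2 T3 I12 I23 A01 B3 *; set G3 := nat_of_ord (t (f o3)) in O01 O12 O13 O23 T0 T1 T2 T3 I12 I23 A01 B3 *;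
  set F0 := nat_of_ord (f o0) in O01 O12 O13 O23 T0 T1 T2 T3 I12 I23 A01 B3 *; set F1 := nat_of_ord (f o1) in O01 O12 O13 O23 T0 T1 T2 T3 I12 I23 A01 B3 *;
  set F2 := nat_of_ord (f o2) in O01 O12 O13 O23 T0 T1 T2 T3 I12 I23 A01 B3 *; set F3 := nat_of_ord (f o3) in O01 O12 O13 O23 T0 T1 T2 T3 I12 I23 A01 B3 *;
  clearbody G0 G1 G2 G3 F0 F1 F2 F3; mylia.
case=> i [j [l [h1 [h2 [h3 [v1 [v2 [v3 v4]]]]]]]].
rewrite size_wl in h3.
have hi : i < n by mylia.
have hi1 : i.+1 < n by mylia.
have hj : j < n by mylia.
move: v1 v2 v3 v4.
rewrite (nth_wl t (Ordinal hi)) (nth_wl t (Ordinal hi1)) (nth_wl t (Ordinal hj)) (nth_wl t (Ordinal h3)) /R.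
have := ltn_ord (t (Ordinal hi)); have := ltn_ord (t (Ordinal hi1)); have := ltn_ord (t (Ordinal hj));
have := ltn_ord (t (Ordinal h3)) => T3 T2 T1 T0 v1 v2 v3 v4.
have D : nat_of_ord (t (Ordinal hj)) != t (Ordinal h3).
  by apply/eqP => /ord_inj /perm_inj /(congr1 val) /=; mylia.
apply/existsP; exists [ffun a : 'I_4 => nth (Ordinal hi) [:: Ordinal hi; Ordinal hi1; Ordinal hj; Ordinal h3] a].
apply/and3P; split; apply/forallP => a; apply/forallP => b; rewrite !ffunE ?Hp /adj12;
  case: a => [[|[|[|[|a]]]] Ha] //; case: b => [[|[|[|[|b]]]] Hb] //=;
  case: up Hp v4 => _ v4 /=; try apply/eqP;
  set A0 := nat_of_ord (t (Ordinal hi)) in T0 v1 v2 v3 v4 *;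
  set A1 := nat_of_ord (t (Ordinal hi1)) in T1 v1 v2 v3 v4 *;
  set A2 := nat_of_ord (t (Ordinal hj)) in T2 v1 v2 v3 v4 D *;
  set A3 := nat_of_ord (t (Ordinal h3)) in T3 v1 v2 v3 v4 D *;
  clearbody A0 A1 A2 A3; mylia.
Qed.

End VC.

Section Final.
Variable n : nat.
Hypothesis n1 : 1 < n.

Let n0 : 0 < n. Proof. by apply: ltn_trans n1. Qed.

Lemma cc_V (up : bool) (p : 'S_4)
  (Hp : forall a : 'I_4, nat_of_ord (p a) = nth 0 (if up then [:: 0; 1; 2; 3] else [:: 0; 1; 3; 2]) a)
  (s : 'S_n) : cyc_contains s p adj12 = ~~ V up (wl s).
Proof.
have uw : uniq (wl s) := piota_uniq (wl_perm s).
have sw : 1 < size (wl s) by rewrite size_wl.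
apply/existsP/idP.
  case=> r /(vc_lin Hp); rewrite wl_rot // => H.
  by apply: (proj1 (BR up uw sw)); exists r; rewrite size_wl.
move/(proj2 (BR up uw sw)) => [r [rs H]]; rewrite size_wl in rs.
by exists (Ordinal rs); apply/(vc_lin Hp); rewrite wl_rot.
Qed.

Lemma cyc_rotp k (s : 'S_n) : k < n -> cyc (rotp k s) = cyc s.
Proof.
move=> kn; apply/setP => X; apply/imsetP/imsetP => [[j _ ->]|[j _ ->]].
  exists (Ordinal (ltn_pmod (j + k) n0)) => //.
  by rewrite rotp_add (rotp_modn _ _ n0).
exists (Ordinal (ltn_pmod (j + (n - k)) n0)) => //.
rewrite rotp_add [RHS](rotp_modn _ _ n0) /= modnDml -addnA subnK ?(ltnW kn) //.
by rewrite modnDr modn_small.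
Qed.

Lemma card_cyc (up : bool) (p : 'S_4)
  (Hp : forall a : 'I_4, nat_of_ord (p a) = nth 0 (if up then [:: 0; 1; 2; 3] else [:: 0; 1; 3; 2]) a) :
  #|cycAv n p adj12| = size (S up n).
Proof.
set A := [set s : 'S_n | (head 0 (wl s) == 0) && V up (wl s)].
have E : cycAv n p adj12 = (@cyc n) @: A.
  apply/setP => X; rewrite /cycAv; apply/imsetP/imsetP => [[s]|[s]].
    rewrite inE (cc_V Hp) negbK => Vs ->.
    have z : 0 \in wl s by rewrite (piota_mem _ (wl_perm s)).
    have kn : index 0 (wl s) < n by rewrite -[X in _ < X](size_wl s) index_mem.
    exists (rotp (index 0 (wl s)) s); last by rewrite cyc_rotp.
    rewrite inE wl_rot // V_rot ?(piota_uniq (wl_perm s)) ?index_size // Vs andbT.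
    by rewrite rot_index //= eqxx.
  by rewrite inE => /andP[_ Vs] ->; exists s => //; rewrite inE (cc_V Hp) negbK.
rewrite E card_in_imset.
  rewrite cardE -(size_map (@wl n)); apply: perm_size; apply: uniq_perm.
  - rewrite map_inj_uniq ?enum_uniq //; exact: wl_inj.
  - exact/filter_uniq/permutations_uniq.
  move=> L; rewrite memS; apply/mapP/idP => [[s]|].
    by rewrite mem_enum inE => /andP[h V] ->; rewrite h V wl_perm.
  move=> /andP[/andP[h V] pL]; have [s Es] := wl_surj pL.
  by exists s => //; rewrite mem_enum inE Es h V.
move=> s t; rewrite !inE => /andP[hs _] /andP[ht _] Est.
have : t \in cyc t by apply/imsetP; exists (Ordinal n0) => //; rewrite rotp0.
rewrite -Est => /imsetP[k _ Ek].
have Ew : wl t = rot k (wl s) by rewrite Ek wl_rot.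
have uw : uniq (wl s) := piota_uniq (wl_perm s).
have k0 : nat_of_ord k = 0.
  move: ht; rewrite Ew -nth0 nth_rot ?size_wl ?(ltnW (ltn_ord k)) //.
  rewrite ifT; last by have := ltn_ord k; mylia.
  have h0 : nth 0 (wl s) 0 = 0 by rewrite nth0; exact/eqP.
  rewrite add0n -{2}h0 (nth_uniq 0 _ _ uw) ?size_wl //.
  by move/eqP.
by rewrite Ek (_ : k = Ordinal n0) ?rotp0 //; apply: ord_inj.
Qed.

End Final.

Unset Implicit Arguments.

Theorem theorem5p4 (n : nat) (hn : 2 <= n) :
  #|cycAv n p1234 adj12| = (1 + \sum_(0 <= i < n.-1) i * (i.+1) ^ (n - i - 2))%N /\
  #|cycAv n p1243 adj12| = (1 + \sum_(0 <= i < n.-1) i * (i.+1) ^ (n - i - 2))%N.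
Proof.
have n0 : 0 < n by apply: ltn_trans hn.
split.
  by rewrite (@card_cyc n hn true p1234 pv1) size_S.
by rewrite (@card_cyc n hn false p1243 pv2) size_S.
Qed.
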